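(* In the category $\mathbf{FCLS}$ of finite closure spaces, every descent morphism is an effective descent morphism.
   Context: A closure space is a pair $(A,\mathcal{C}_A)$ where $A$ is a set and $\mathcal{C}_A$ is a set of subsets of $A$ closed under arbitrary intersections (so $A\in\mathcal{C}_A$). $\mathbf{CLS}$ has closure spaces as objects and, as morphisms $\alpha:A\to B$, maps with $\alpha^{-1}(B')\in\mathcal{C}_A$ for all $B'\in\mathcal{C}_B$; $\mathbf{FCLS}$ is its full subcategory of closure spaces with finite underlying set (it has pullbacks and coequalizers of equivalence relations). For a morphism $p:E\to B$ in a category $\mathbf{C}$ with pullbacks, a descent data for $p$ is a triple $(C,\gamma,\xi)$ with $\gamma:C\to E$, $\xi:E\times_BC\to C$ (pullback of $p$ and $p\gamma$, projections $\pi_1,\pi_2$) such that $\gamma\xi=\pi_1$, $\xi\langle\gamma,1_C\rangle=1_C$, $\xi\circ(E\times_B\xi)=\xi\circ(E\times_B\pi_2)$; a morphism $(C,\gamma,\xi)\to(C',\gamma',\xi')$ is $f:C\to C'$ with $\gamma'f=\gamma$ and $f\xi=\xi'\circ(E\times_Bf)$. This gives a category $\mathrm{Des}(p)$ and a comparison functor $K^p:(\mathbf{C}\downarrow B)\to\mathrm{Des}(p)$, $K^p(A,\alpha)=(E\times_BA,\pi_1,E\times_B\pi_2)$. The morphism $p$ is a descent morphism if $K^p$ is fully faithful (equivalently, $p$ is a pullback-stable regular epimorphism), and an effective descent morphism if $K^p$ is an equivalence of categories. *)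

(* Defs.v *)
From mathcomp Require Import all_boot.
Set Implicit Arguments.
Unset Strict Implicit.
Unset Printing Implicit Defensive.

(* Finite closure spaces: a finite set A with a family of subsets closed
   under arbitrary intersections (the empty intersection being A).     *)
Record fcls := FCLS {
  carrier :> finType;
  closed : {set {set carrier}};
  closedP : forall F : {set {set carrier}},
      F \subset closed -> \bigcap_(X in F) X \in closed }.

Definition cont (A B : fcls) (f : A -> B) : Prop :=
  forall Y, Y \in closed B -> f @^-1: Y \in closed A.

Definition gen_closed (T : finType) (gens : {set {set T}}) : {set {set T}} :=
  [set S : {set T} | S == \bigcap_(X in gens | S \subset X) X].

Lemma gen_closedP (T : finType) (gens : {set {set T}}) (F : {set {set T}}) :
  F \subset gen_closed gens -> \bigcap_(X in F) X \in gen_closed gens.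
Proof.
move=> /subsetP sF; rewrite inE eqEsubset; apply/andP; split.
  by apply/bigcapsP => X /andP [_ ?].
apply/subsetP => x /bigcapP xG; apply/bigcapP => S SF.
have := sF S SF; rewrite inE => /eqP ->; apply/bigcapP => X /andP [Xg SX].
apply: xG; rewrite Xg /=; apply: subset_trans SX; exact: bigcap_inf.
Qed.

Definition gen_fcls (T : finType) (gens : {set {set T}}) : fcls :=
  @FCLS T (gen_closed gens) (@gen_closedP T gens).

Lemma gen_closed_gens (T : finType) (gens : {set {set T}}) X :
  X \in gens -> X \in closed (gen_fcls gens).
Proof.
move=> Xg; rewrite /= inE eqEsubset; apply/andP; split.
  by apply/bigcapsP => Y /andP [_ ?].
by apply: bigcap_inf; rewrite Xg subxx.
Qed.

Lemma cont_gen (A : fcls) (T : finType) (gens : {set {set T}}) (f : A -> T) :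
  (forall X, X \in gens -> f @^-1: X \in closed A) ->
  @cont A (gen_fcls gens) f.
Proof.
move=> hg S; rewrite /= inE => /eqP ->.
set G := [set X in gens | S \subset X].
have -> : f @^-1: (\bigcap_(X in gens | S \subset X) X)
        = \bigcap_(Y in ((fun X : {set T} => f @^-1: X) @: G)) Y.
  apply/setP => a; rewrite inE; apply/bigcapP/bigcapP.
    move=> h Y /imsetP [X XG ->]; rewrite inE; apply: h.
    by move: XG; rewrite inE.
  move=> h X XgS; have := h (f @^-1: X); rewrite inE; apply.
  by apply/imsetP; exists X; rewrite // inE.
apply: closedP; apply/subsetP => Y /imsetP [X]; rewrite inE => /andP [Xg _] ->.
exact: hg.
Qed.

(* Pullbacks in FCLS: underlying set is the set-theoretic pullback, with
   the initial closure structure w.r.t. the two projections (generated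
   by preimages of closed sets under the projections).                *)
Section Pullback.
Variables (E B : fcls) (p : E -> B).

Definition pb_type (C : fcls) (q : C -> B) : finType :=
  {x : E * C | p x.1 == q x.2}.

Definition pb_gens (C : fcls) (q : C -> B) : {set {set pb_type q}} :=
  ((fun X : {set E} => [set z : pb_type q | (val z).1 \in X]) @: closed E) :|:
  ((fun Y : {set C} => [set z : pb_type q | (val z).2 \in Y]) @: closed C).

Definition pb (C : fcls) (q : C -> B) : fcls := gen_fcls (pb_gens q).

Definition pi1 (C : fcls) (q : C -> B) (z : pb q) : E := (val z).1.
Definition pi2 (C : fcls) (q : C -> B) (z : pb q) : C := (val z).2.

Lemma pi1_cont (C : fcls) (q : C -> B) : cont (@pi1 C q).
Proof.
move=> X XE; apply: gen_closed_gens; apply/setUP; left.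
by apply/imsetP; exists X => //; apply/setP => z; rewrite !inE.
Qed.

Lemma pi2_cont (C : fcls) (q : C -> B) : cont (@pi2 C q).
Proof.
move=> Y YC; apply: gen_closed_gens; apply/setUP; right.
by apply/imsetP; exists Y => //; apply/setP => z; rewrite !inE.
Qed.

Lemma pbP (C : fcls) (q : C -> B) (z : pb q) : q (pi2 z) = p (pi1 z).
Proof. by rewrite /pi1 /pi2; case: z => [[e c] /= /eqP ->]. Qed.

Definition pbmap (X Y : fcls) (qX : X -> B) (qY : Y -> B) (f : X -> Y)
    (hf : forall x, qY (f x) = qX x) (z : pb qX) : pb qY.
Proof.
refine (exist _ ((val z).1, f (val z).2) _).
by rewrite /= hf; exact: (valP z).
Defined.

Lemma pbmap_val (X Y : fcls) (qX : X -> B) (qY : Y -> B) (f : X -> Y)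
    (hf : forall x, qY (f x) = qX x) (z : pb qX) :
  val (pbmap hf z) = ((val z).1, f (val z).2).
Proof. by []. Qed.

Lemma pbmap_cont (X Y : fcls) (qX : X -> B) (qY : Y -> B) (f : X -> Y)
    (hf : forall x, qY (f x) = qX x) :
  cont f -> cont (pbmap hf).
Proof.
move=> fc; apply: cont_gen => G /setUP [] /imsetP [Z ZC ->].
  apply: gen_closed_gens; apply/setUP; left; apply/imsetP; exists Z => //.
  by apply/setP => z; rewrite !inE.
apply: gen_closed_gens; apply/setUP; right; apply/imsetP.
exists (f @^-1: Z); first exact: fc.
by apply/setP => z; rewrite !inE.
Qed.

End Pullback.

Section Descent.
Variables (E B : fcls) (p : E -> B).

Record sobj := SObj {
  sdom :> fcls;
  smap : sdom -> B;
  smap_cont : cont smap }.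

Record shom (X Y : sobj) := SHom {
  shfun :> X -> Y;
  shcont : cont shfun;
  shcomm : forall x, @smap Y (shfun x) = @smap X x }.

Definition pbB (C : fcls) (q : C -> B) (z : pb p q) : B := p (pi1 z).

Record dobj := DObj {
  dC :> fcls;
  dgamma : dC -> E;
  dgamma_cont : cont dgamma;
  dxi : pb p (p \o dgamma) -> dC;
  dxi_cont : cont dxi;
  dlaw1 : forall z, dgamma (dxi z) = pi1 z;
  dlaw2 : forall c : dC,
      dxi (exist _ (dgamma c, c) (eqxx (p (dgamma c)))) = c;
  dlaw3 : forall y : pb p (@pbB _ (p \o dgamma)),
      dxi (pbmap (qY := p \o dgamma) (f := dxi)
             (fun z => f_equal p (dlaw1 z)) y)
      = dxi (pbmap (qY := p \o dgamma) (f := @pi2 _ _ p _ (p \o dgamma))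
             (@pbP _ _ p _ (p \o dgamma)) y) }.

Record dhom (D D' : dobj) := DHom {
  dhfun :> D -> D';
  dhcont : cont dhfun;
  dhgamma : forall c, @dgamma D' (dhfun c) = @dgamma D c;
  dhxi : forall z, dhfun (dxi z)
      = dxi (pbmap (qX := p \o @dgamma D) (qY := p \o @dgamma D') (f := dhfun)
               (fun c => f_equal p (dhgamma c)) z) }.

Definition K0_xi (X : sobj) :
    pb p (p \o (@pi1 _ _ p _ (@smap X))) -> pb p (@smap X) :=
  pbmap (qY := @smap X) (f := @pi2 _ _ p _ (@smap X)) (@pbP _ _ p _ (@smap X)).

Lemma K0_law1 (X : sobj) (z : pb p (p \o (@pi1 _ _ p _ (@smap X)))) :
  pi1 (@K0_xi X z) = pi1 z.
Proof. by []. Qed.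

Lemma K0_law2 (X : sobj) (c : pb p (@smap X)) :
  K0_xi (exist _ (pi1 c, c) (eqxx (p (pi1 c)))) = c.
Proof. by apply: val_inj; case: c => [[e a] h]. Qed.

Lemma K0_law3 (X : sobj) (y : pb p (@pbB _ (p \o (@pi1 _ _ p _ (@smap X))))) :
  K0_xi (pbmap (qY := p \o (@pi1 _ _ p _ (@smap X))) (f := @K0_xi X)
          (fun z => f_equal p (K0_law1 z)) y)
  = K0_xi (pbmap (qY := p \o (@pi1 _ _ p _ (@smap X)))
          (f := @pi2 _ _ p _ (p \o (@pi1 _ _ p _ (@smap X))))
          (@pbP _ _ p _ (p \o (@pi1 _ _ p _ (@smap X)))) y).
Proof. by apply: val_inj. Qed.

Definition K0 (X : sobj) : dobj :=
  @DObj (pb p (@smap X)) (@pi1 _ _ p _ (@smap X)) (@pi1_cont _ _ p _ (@smap X))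
    (@K0_xi X) (pbmap_cont _ (@pi2_cont _ _ p _ (@smap X))) (@K0_law1 X) (@K0_law2 X) (@K0_law3 X).

Definition K1_fun (X Y : sobj) (f : shom X Y) : K0 X -> K0 Y :=
  pbmap (qX := @smap X) (qY := @smap Y) (f := f) (@shcomm X Y f).

Lemma K1_gamma (X Y : sobj) (f : shom X Y) (c : K0 X) :
  @dgamma (K0 Y) (K1_fun f c) = @dgamma (K0 X) c.
Proof. by []. Qed.

Lemma K1_xi (X Y : sobj) (f : shom X Y) z :
  K1_fun f (@dxi (K0 X) z)
  = @dxi (K0 Y) (pbmap (qX := p \o @dgamma (K0 X)) (qY := p \o @dgamma (K0 Y))
                  (f := K1_fun f) (fun c => f_equal p (K1_gamma f c)) z).
Proof. by apply: val_inj. Qed.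

Definition K1 (X Y : sobj) (f : shom X Y) : dhom (K0 X) (K0 Y) :=
  @DHom (K0 X) (K0 Y) (K1_fun f) (pbmap_cont _ (@shcont X Y f))
    (@K1_gamma X Y f) (@K1_xi X Y f).

(* K^p is fully faithful: bijective on hom-sets (morphisms in FCLS are
   determined by their underlying maps, so equality = pointwise equality) *)
Definition K_fully_faithful : Prop :=
  (forall (X Y : sobj) (f g : shom X Y),
      (forall z, K1 f z = K1 g z) -> forall x, f x = g x) /\
  (forall (X Y : sobj) (h : dhom (K0 X) (K0 Y)),
      exists f : shom X Y, forall z, K1 f z = h z).

(* K^p is an equivalence of categories: there is a functor
   G : Des(p) -> (FCLS | B) with natural isomorphisms 1 ~= G K^p and
   K^p G ~= 1.  Identities and composites are expressed through pointwise
   equality of underlying maps. *)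
Definition K_equivalence : Prop :=
  exists (G0 : dobj -> sobj) (G1 : forall D D', dhom D D' -> shom (G0 D) (G0 D')),
    (forall (D : dobj) (h : dhom D D), (forall x, h x = x) ->
        forall y, G1 D D h y = y) /\
    (forall (D1 D2 D3 : dobj) (h : dhom D2 D3) (k : dhom D1 D2) (hk : dhom D1 D3),
        (forall x, hk x = h (k x)) ->
        forall y, G1 _ _ hk y = G1 _ _ h (G1 _ _ k y)) /\
    (exists (eta : forall X, shom X (G0 (K0 X)))
            (eta' : forall X, shom (G0 (K0 X)) X),
        (forall X x, eta' X (eta X x) = x) /\
        (forall X y, eta X (eta' X y) = y) /\
        (forall (X Y : sobj) (f : shom X Y) x,
            eta Y (f x) = G1 _ _ (K1 f) (eta X x))) /\
    (exists (eps : forall D, dhom (K0 (G0 D)) D)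
            (eps' : forall D, dhom D (K0 (G0 D))),
        (forall D x, eps' D (eps D x) = x) /\
        (forall D y, eps D (eps' D y) = y) /\
        (forall (D D' : dobj) (h : dhom D D') z,
            eps D' (K1 (G1 _ _ h) z) = h (eps D z))).

End Descent.

Definition descent_morphism (E B : fcls) (p : E -> B) : Prop :=
  cont p /\ K_fully_faithful p.

Definition effective_descent_morphism (E B : fcls) (p : E -> B) : Prop :=
  cont p /\ K_equivalence p.

(* Main.v *)
Require Import Defs.
From mathcomp Require Import all_boot.
Require Import Defs.
Set Implicit Arguments.
Unset Strict Implicit.
Unset Printing Implicit Defensive.

Section Gen.
Variable A : fcls.

Definition clo (S : {set A}) : {set A} :=
  \bigcap_(X in [set X in closed A | S \subset X]) X.

Lemma clo_closed (S : {set A}) : clo S \in closed A.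
Proof. apply: closedP; apply/subsetP => X; rewrite inE => /andP[]//. Qed.

Lemma sub_clo (S : {set A}) : S \subset clo S.
Proof. by apply/bigcapsP => X; rewrite inE => /andP[]. Qed.

Lemma clo_min (S X : {set A}) : X \in closed A -> S \subset X -> clo S \subset X.
Proof. by move=> XC SX; apply: bigcap_inf; rewrite inE XC. Qed.

Lemma closedI (X Y : {set A}) : X \in closed A -> Y \in closed A -> X :&: Y \in closed A.
Proof.
move=> XC YC.
have -> : X :&: Y = \bigcap_(Z in [set X; Y]) Z.
  apply/setP => x; rewrite inE; apply/andP/bigcapP.
    by case=> hX hY Z; rewrite !inE => /orP[]/eqP->.
  by move=> h; split; apply: h; rewrite !inE eqxx ?orbT.
by apply: closedP; apply/subsetP => Z; rewrite !inE => /orP[]/eqP->.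
Qed.
End Gen.

Lemma gen_sep (T : finType) (gens : {set {set T}}) (M : {set T}) u :
  M \in gen_closed gens ->
  (forall G, G \in gens -> M \subset G -> u \in G) -> u \in M.
Proof.
rewrite inE => /eqP {2}-> h; apply/bigcapP => G /andP[]; exact: h.
Qed.

Lemma pb_gensP (E B C : fcls) (p : E -> B) (q : C -> B) G :
  G \in pb_gens p q ->
  (exists2 X, X \in closed E & G = [set z : pb_type p q | (val z).1 \in X]) \/
  (exists2 Y, Y \in closed C & G = [set z : pb_type p q | (val z).2 \in Y]).
Proof.
by case/setUP => /imsetP [X XC ->]; [left|right]; exists X.
Qed.

Section Construct.
Variables (E B : fcls) (p : E -> B) (hp : cont p) (D : dobj p).

Local Notation g := (@dgamma _ _ p D).
Local Notation Q := (pb_type p (p \o g)).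

Definition xi' (e : E) (c : D) : D :=
  if @insub _ _ Q (e, c) is Some z then dxi z else c.

Lemma xi'E (z : pb p (p \o g)) : xi' (val z).1 (val z).2 = dxi z.
Proof. by rewrite /xi' -surjective_pairing valK. Qed.

Lemma xi'E2 e c (h : p e == p (g c)) : xi' e c = dxi (exist _ (e, c) h : Q).
Proof. by rewrite -xi'E. Qed.

Lemma L1 e c : p e = p (g c) -> g (xi' e c) = e.
Proof. move/eqP=> h; rewrite (xi'E2 h); exact: dlaw1. Qed.

Lemma L2 c : xi' (g c) c = c.
Proof. rewrite (xi'E2 (eqxx _)); exact: dlaw2. Qed.

Lemma L3 e e' c : p e = p e' -> p e' = p (g c) -> xi' e (xi' e' c) = xi' e c.
Proof.
move=> h1 /eqP h2; set z : Q := exist _ (e', c) h2.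
have h3 : p e == @pbB _ _ p _ (p \o g) z by apply/eqP.
have := dlaw3 (exist _ (e, z) h3 : pb_type p (@pbB _ _ p _ (p \o g))).
by rewrite -!xi'E /= (xi'E2 h2).
Qed.

Lemma Lp e c : p e = p (g c) -> p (g (xi' e c)) = p e.
Proof. by move=> h; rewrite L1. Qed.

Definition rel (c c' : D) : bool := (p (g c) == p (g c')) && (xi' (g c') c == c').

Lemma rel_refl c : rel c c.
Proof. by rewrite /rel eqxx L2 eqxx. Qed.

Lemma rel_sym c c' : rel c c' -> rel c' c.
Proof.
case/andP=> /eqP h /eqP h'; rewrite /rel eq_sym h eqxx /=.
by rewrite -{1}h' (L3 h (esym h)) L2.
Qed.

Lemma rel_trans c c' c'' : rel c c' -> rel c' c'' -> rel c c''.
Proof.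
case/andP=> /eqP h /eqP h'; case/andP=> /eqP k /eqP k'.
rewrite /rel h k eqxx /=.
by rewrite -(L3 (esym k) (esym h)) h' k'.
Qed.

Lemma rel_xi e c : p e = p (g c) -> rel c (xi' e c).
Proof.
move=> h; rewrite /rel Lp // h eqxx /= L1 //.
Qed.

Definition rep (c : D) : D := odflt c [pick c' | rel c c'].

Lemma rel_rep c : rel c (rep c).
Proof. by rewrite /rep; case: pickP => //= _; rewrite rel_refl. Qed.

Lemma rep_eq c c' : rel c c' -> rep c = rep c'.
Proof.
move=> h; rewrite /rep (@eq_pick _ _ (fun x => rel c' x)).
  case: pickP => [//|]; by move/(_ c'); rewrite rel_refl.
move=> x; apply/idP/idP => hx.
  exact: rel_trans (rel_sym h) hx.
exact: rel_trans h hx.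
Qed.

Lemma rep_idem c : rep (rep c) == rep c.
Proof. by rewrite -(rep_eq (rel_rep c)). Qed.

Definition Aty := {c : D | rep c == c}.

Definition qm (c : D) : Aty := exist _ (rep c) (rep_idem c).

Definition Acl : {set {set Aty}} := [set Y : {set Aty} | qm @^-1: Y \in closed D].

Lemma AclP (F : {set {set Aty}}) : F \subset Acl -> \bigcap_(X in F) X \in Acl.
Proof.
move=> /subsetP sF; rewrite inE.
have -> : qm @^-1: (\bigcap_(X in F) X) = \bigcap_(Y in (fun X : {set Aty} => qm @^-1: X) @: F) Y.
  apply/setP => c; rewrite inE; apply/bigcapP/bigcapP.
    by move=> h Y /imsetP [X XF ->]; rewrite inE; apply: h.
  by move=> h X XF; have := h (qm @^-1: X); rewrite inE; apply; apply/imsetP; exists X.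
apply: closedP; apply/subsetP => Y /imsetP [X XF ->].
by have := sF X XF; rewrite inE.
Qed.

Definition Afc : fcls := @FCLS Aty Acl AclP.

Definition alpha (a : Afc) : B := p (g (val a)).

Lemma rel_pg c c' : rel c c' -> p (g c) = p (g c').
Proof. by case/andP => /eqP. Qed.

Lemma alpha_q c : alpha (qm c) = p (g c).
Proof. by rewrite /alpha /= -(rel_pg (rel_rep c)). Qed.

Lemma alpha_cont : cont alpha.
Proof.
move=> T TB; rewrite /= inE.
have -> : qm @^-1: (alpha @^-1: T) = g @^-1: (p @^-1: T).
  by apply/setP => c; rewrite !inE alpha_q.
apply: dgamma_cont; exact: hp.
Qed.

Definition XD : sobj B := SObj alpha_cont.

Local Notation P := (pb p alpha).

Definition eps (w : P) : D := xi' (val w).1 (val (val w).2).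

Lemma eps'_proof c : p (g c) == alpha (qm c).
Proof. by rewrite alpha_q. Qed.

Definition eps' (c : D) : P := exist _ (g c, qm c) (eps'_proof c).

Lemma epsK' c : eps (eps' c) = c.
Proof.
rewrite /eps /=.
have := rel_sym (rel_rep c); case/andP => _ /eqP; done.
Qed.

Lemma qm_val (a : Aty) : qm (val a) = a.
Proof. by apply: val_inj; rewrite /= (eqP (valP a)). Qed.

Lemma eps_facts (w : P) :
  g (eps w) = (val w).1 /\ rel (eps w) (val (val w).2).
Proof.
have h : p (val w).1 = p (g (val (val w).2)) by have := valP w; move/eqP.
split; first by rewrite /eps L1.
apply: rel_sym; exact: rel_xi.
Qed.

Lemma eps'K w : eps' (eps w) = w.
Proof.
have [h1 h2] := eps_facts w.
apply: val_inj; rewrite /= h1.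
have -> : qm (eps w) = (val w).2.
  by apply: val_inj => /=; rewrite (rep_eq h2) (eqP (valP (val w).2)).
by clear h1 h2; case: w => [[]].
Qed.

Definition sat (K : {set D}) : {set D} := [set c | [exists k in K, rel c k]].

Lemma sub_sat (K : {set D}) : K \subset sat K.
Proof. by apply/subsetP => c cK; rewrite inE; apply/existsP; exists c; rewrite cK rel_refl. Qed.

Lemma star (K : {set D}) c e' : K \in closed D ->
  c \in clo (sat K) -> e' \in clo (g @: K) -> p e' = p (g c) -> xi' e' c \in K.
Proof.
move=> KC cK eK /eqP h.
have xiC := @dxi_cont _ _ p D K KC.
rewrite (xi'E2 h).
suff : (exist _ (e', c) h : Q) \in (@dxi _ _ p D) @^-1: K by rewrite inE.
apply: (gen_sep xiC) => G /pb_gensP [[X XC ->]|[W WC ->]] sG; rewrite inE /=.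
  apply: (subsetP (clo_min XC _)) eK; apply/subsetP => _ /imsetP [k kK ->].
  have := subsetP sG (exist _ (g k, k) (eqxx _) : Q); rewrite !inE /=; apply.
  by rewrite dlaw2.
apply: (subsetP (clo_min WC _)) cK; apply/subsetP => c0; rewrite inE.
case/existsP => k /andP [kK /andP [/eqP h1 /eqP h2]].
have h3 : p (g k) == (p \o g) c0 by rewrite /= h1.
have := subsetP sG (exist _ (g k, c0) h3 : Q); rewrite !inE /=; apply.
by rewrite -(xi'E2 h3) h2.
Qed.

Lemma eps_cont : cont eps.
Proof.
move=> Z ZC.
set X := clo (g @: Z).
pose Inv (K : {set D}) := [&& K \in closed D, Z \subset K & K :&: g @^-1: X \subset Z].
have InvZ : Inv Z by rewrite /Inv ZC subxx subsetIl.
case: (arg_maxnP (fun K : {set D} => #|K|) InvZ) => K /and3P [KC ZK KX] Kmax.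
have satK : sat K \subset K.
  set K' := clo (sat K).
  have ZK' : Z \subset K' := subset_trans ZK (subset_trans (sub_sat K) (sub_clo _)).
  have InvK' : Inv K'.
    rewrite /Inv clo_closed ZK' /=; apply/subsetP => c; rewrite !inE => /andP [cK' gX].
    have cK : c \in K.
      rewrite -(L2 c); apply: star => //.
      apply: (subsetP (clo_min (clo_closed _) _)) gX.
      exact: subset_trans (imsetS _ ZK) (sub_clo _).
    by apply: (subsetP KX); rewrite !inE cK.
  have KK' : K \subset K' := subset_trans (sub_sat K) (sub_clo _).
  have le : #|K'| <= #|K| := Kmax K' InvK'.
  have /eqP eK : K == K' by rewrite eqEcard KK' le.
  by rewrite {2}eK; exact: sub_clo.
have satKE c k : rel c k -> k \in K -> c \in K.
  move=> r kK; apply: (subsetP satK); rewrite inE; apply/existsP; exists k; by rewrite kK.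
set Y := [set a : Aty | val a \in K].
have YC : Y \in closed Afc.
  rewrite /= inE.
  have -> : qm @^-1: Y = K.
    apply/setP => c; rewrite !inE /=; apply/idP/idP => h.
      exact: satKE (rel_rep c) h.
    exact: satKE (rel_sym (rel_rep c)) h.
  exact: KC.
have -> : eps @^-1: Z = [set z : pb_type p alpha | (val z).1 \in X] :&:
                       [set z : pb_type p alpha | (val z).2 \in Y].
  apply/setP => w; rewrite !inE.
  have [h1 h2] := eps_facts w.
  apply/idP/andP => [cZ | [wX wY]].
    split; first by rewrite -h1; apply: (subsetP (sub_clo _)); apply: imset_f.
    by apply: satKE (rel_sym h2) (subsetP ZK _ cZ).
  apply: (subsetP KX); rewrite !inE h1 wX andbT.
  exact: satKE h2 wY.
apply: closedI; apply: gen_closed_gens; apply/setUP; [left|right]; apply/imsetP.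
  by exists X => //; exact: clo_closed.
by exists Y.
Qed.

Lemma eps'_cont : cont eps'.
Proof.
apply: cont_gen => G /setUP [] /imsetP [Z ZC ->].
  have -> : eps' @^-1: [set z : pb_type p alpha | (val z).1 \in Z] = g @^-1: Z.
    by apply/setP => c; rewrite !inE.
  exact: dgamma_cont.
have -> : eps' @^-1: [set z : pb_type p alpha | (val z).2 \in Z] = qm @^-1: Z.
  by apply/setP => c; rewrite !inE.
by move: ZC; rewrite inE.
Qed.

Lemma eps_xi z : eps (@dxi _ _ p (K0 p XD) z)
  = dxi (pbmap (qX := p \o @dgamma _ _ p (K0 p XD)) (qY := p \o g) (f := eps)
               (fun c => f_equal p (proj1 (eps_facts c))) z).
Proof.
rewrite -xi'E /= /eps /=.
case: z => [[e' [[e a] /= h]] /= h'].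
rewrite /pi1 /pi2 /= in h' *.
have h1 : p e = p (g (val a)) by apply/eqP.
by rewrite L3 //; apply/eqP.
Qed.

Definition epsD : dhom (K0 p XD) D := @DHom _ _ p (K0 p XD) D eps eps_cont
  (fun c => proj1 (eps_facts c)) eps_xi.

Lemma eps'_gamma c : @dgamma _ _ p (K0 p XD) (eps' c) = g c.
Proof. by []. Qed.

Lemma eps'_xi z : eps' (dxi z)
  = @dxi _ _ p (K0 p XD) (pbmap (qX := p \o g) (qY := p \o @dgamma _ _ p (K0 p XD)) (f := eps')
               (fun c => f_equal p (eps'_gamma c)) z).
Proof.
apply: val_inj => /=; rewrite dlaw1; congr pair.
apply: val_inj => /=; rewrite -xi'E; apply: esym; apply: rep_eq; apply: rel_xi.
by have := valP z; move/eqP.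
Qed.

Definition eps'D : dhom D (K0 p XD) := @DHom _ _ p D (K0 p XD) eps' eps'_cont
  eps'_gamma eps'_xi.

Lemma epsD_K x : eps'D (epsD x) = x.
Proof. exact: eps'K. Qed.
Lemma epsD_K' x : epsD (eps'D x) = x.
Proof. exact: epsK'. Qed.

End Construct.

From Stdlib Require Import ClassicalEpsilon.

Lemma cont_id (A : fcls) : cont (fun x : A => x).
Proof. by move=> Y YC; suff -> : (fun x : A => x) @^-1: Y = Y by []; apply/setP => x; rewrite inE. Qed.

Lemma cont_comp (A1 A2 A3 : fcls) (f : A2 -> A3) (h : A1 -> A2) :
  cont f -> cont h -> cont (fun x => f (h x)).
Proof.
move=> cf ch Y YC.
have -> : (fun x => f (h x)) @^-1: Y = h @^-1: (f @^-1: Y) by apply/setP => x; rewrite !inE.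
exact/ch/cf.
Qed.

Section Abstract.
Variables (E B : fcls) (p : E -> B).

Definition sid (X : sobj B) : shom X X := @SHom B X X (fun x => x) (@cont_id _) (fun x => erefl).

Definition scomp (X Y Z : sobj B) (f : shom Y Z) (h : shom X Y) : shom X Z :=
  @SHom B X Z (fun x => f (h x)) (cont_comp (shcont f) (shcont h))
    (fun x => etrans (shcomm f (h x)) (shcomm h x)).

Lemma dcomp_gamma (D1 D2 D3 : dobj p) (h : dhom D2 D3) (k : dhom D1 D2) c :
  dgamma (h (k c)) = dgamma c.
Proof. by rewrite !dhgamma. Qed.

Lemma dcomp_xi (D1 D2 D3 : dobj p) (h : dhom D2 D3) (k : dhom D1 D2) z :
  h (k (dxi z)) = dxi (pbmap (qX := p \o @dgamma _ _ p D1) (qY := p \o @dgamma _ _ p D3)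
     (f := fun x => h (k x)) (fun c => f_equal p (dcomp_gamma h k c)) z).
Proof.
rewrite dhxi dhxi; congr dxi; exact: val_inj.
Qed.

Definition dcomp (D1 D2 D3 : dobj p) (h : dhom D2 D3) (k : dhom D1 D2) : dhom D1 D3 :=
  @DHom _ _ p D1 D3 (fun x => h (k x)) (cont_comp (dhcont h) (dhcont k))
    (dcomp_gamma h k) (dcomp_xi h k).

Lemma K1_comp (X Y Z : sobj B) (f : shom Y Z) (h : shom X Y) z :
  K1 p (scomp f h) z = K1 p f (K1 p h z).
Proof. exact: val_inj. Qed.

Lemma K1_id (X : sobj B) z : K1 p (sid X) z = z.
Proof. by apply: val_inj; case: z => [[]]. Qed.

End Abstract.

Theorem theorem4p3 (E B : fcls) (p : E -> B) :
  descent_morphism p -> effective_descent_morphism p.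
Proof.
case=> hp [hfaith hfull]; split => //.
pose fullc (X Y : sobj B) (h : dhom (K0 p X) (K0 p Y)) : shom X Y :=
  proj1_sig (constructive_indefinite_description _ (hfull X Y h)).
have fullcP X Y h z : K1 p (fullc X Y h) z = h z.
  exact: (proj2_sig (constructive_indefinite_description _ (hfull X Y h))).
pose G0 := fun D => XD hp D.
pose G1 := fun (D D' : dobj p) (h : dhom D D') =>
  fullc (G0 D) (G0 D') (dcomp (eps'D hp D') (dcomp h (epsD hp D))).
exists G0, G1; split; [|split; [|split]].
- move=> D h hid y.
  apply: (hfaith _ _ (G1 D D h) (sid _)) => z.
  by rewrite K1_id fullcP /= hid ?epsD_K ?eps'K.
- move=> D1 D2 D3 h k hk e y.
  apply: (hfaith _ _ (G1 _ _ hk) (scomp (G1 _ _ h) (G1 _ _ k))) => z.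
  by rewrite K1_comp !fullcP /= ?epsD_K' ?epsK' e.
- exists (fun X => fullc X (G0 (K0 p X)) (eps'D hp (K0 p X))).
  exists (fun X => fullc (G0 (K0 p X)) X (epsD hp (K0 p X))).
  split; [|split].
  + move=> X x.
    apply: (hfaith _ _ (scomp (fullc (G0 (K0 p X)) X (epsD hp (K0 p X)))
                             (fullc X (G0 (K0 p X)) (eps'D hp (K0 p X)))) (sid X)) => z.
    by rewrite K1_comp K1_id !fullcP ?epsD_K' ?epsK'.
  + move=> X y.
    apply: (hfaith _ _ (scomp (fullc X (G0 (K0 p X)) (eps'D hp (K0 p X)))
                             (fullc (G0 (K0 p X)) X (epsD hp (K0 p X)))) (sid _)) => z.
    by rewrite K1_comp K1_id !fullcP ?epsD_K ?eps'K.
  + move=> X Y f x.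
    apply: (hfaith _ _ (scomp (fullc Y (G0 (K0 p Y)) (eps'D hp (K0 p Y))) f)
                       (scomp (G1 _ _ (K1 p f)) (fullc X (G0 (K0 p X)) (eps'D hp (K0 p X))))) => z.
    by rewrite !K1_comp !fullcP /= ?epsD_K' ?epsK'.
- exists (fun D => epsD hp D), (fun D => eps'D hp D).
  split; [|split].
  + by move=> D x; rewrite epsD_K.
  + by move=> D x; rewrite epsD_K'.
  + by move=> D D' h z; rewrite fullcP /= ?epsD_K' ?epsK'.
Qed.
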